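(* Let $F_1$ and $F_2$ be two rooted general $X$-forests, and let $S$ be a maximal sibling set of $F_2$ such that all labels in $S$ are siblings in $F_1$. For any maximal agreement forest $F$ for $F_1$ and $F_2$, if two labels in $S$ are siblings in $F$, then all labels in $S$ form a maximal sibling set in $F$.
   Context: Let $X$ be a finite label set containing $\rho$. A rooted general $X$-forest is a subgraph of a tree whose leaves are bijectively labeled by $X$, whose unlabeled vertices have degree at least 3, and whose leaf $\rho$ is the root; each component contains a leaf, the component label sets partition $X$, and each component is rooted at $\rho$ if it contains it, otherwise at the lowest common ancestor (in the underlying tree) of its labeled leaves. Forests are taken up to forced contraction (non-root unlabeled degree-2 vertices suppressed, unlabeled vertices of degree $<2$ deleted). $\mathrm{Ord}(F)$ is the number of components; $F'$ is a subforest of $F$ if, up to forced contraction, it is isomorphic (preserving labels and roots) to $F$ with some edges deleted; an agreement forest for $F_1,F_2$ is an $X$-forest that is a subforest of both; it is a maximal agreement forest if no agreement forest $F'$ for $F_1,F_2$ contains it as a subforest with $\mathrm{Ord}(F')<\mathrm{Ord}(F)$. Two leaves are siblings if they have a common parent; a sibling set is a set of leaves that are pairwise siblings; a maximal sibling set is a sibling set $S$ whose common parent $p$ has degree $|S|$ if $p$ has no parent, or $|S|+1$ if $p$ has a parent. *)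

(* Defs.v *)
(* Rooted general X-forests, encoded (up to isomorphism and
   forced contraction) by their component partition and their cluster system. *)
From mathcomp Require Import all_boot.
Set Implicit Arguments. Unset Strict Implicit. Unset Printing Implicit Defensive.

Section Forests.
Variables (X : finType) (rho : X).

(* A forest: (blocks, clusters).
   blocks   = the label sets of the components (a partition of X);
   clusters = for every vertex v, the set of labels of its component that are
              descendants of v (v included).  The root leaf rho is the vertex
              whose cluster is its whole block; every other leaf x is the
              vertex with cluster [set x]; unlabelled vertices are the
              remaining clusters. *)
Definition forest := ({set {set X}} * {set {set X}})%type.

Definition blocks (F : forest) := F.1.
Definition clusters (F : forest) := F.2.

Definition rho_block (F : forest) := pblock (blocks F) rho.

Definition is_forest (F : forest) : Prop :=
    [/\ partition (blocks F) [set: X],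
      (forall C, C \in clusters F -> exists2 B, B \in blocks F & C \subset B),
      {subset blocks F <= clusters F},
      (forall x, x != rho -> [set x] \in clusters F) &
      (forall C D, C \in clusters F -> D \in clusters F ->
          [|| C \subset D, D \subset C | [disjoint C & D]])] /\
      (forall C, C \in clusters F -> C != set0) /\
      (* rho is the root leaf of its component: the only vertex whose cluster
         contains rho is rho itself, and rho has exactly one child (if any) *)
      ((forall C, C \in clusters F -> rho \in C -> C = rho_block F) /\
       (rho_block F != [set rho] -> rho_block F :\ rho \in clusters F)).

Definition lv (F : forest) (x : X) : {set X} :=
  if x == rho then rho_block F else [set x].

Definition is_parent (F : forest) (C D : {set X}) : bool :=
  [&& D \in clusters F, C \proper D &
      [forall E : {set X}, ((E \in clusters F) && (C \proper E)) ==> (D \subset E)]].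

Definition has_parent (F : forest) (C : {set X}) : bool :=
  [exists D : {set X}, is_parent F C D].

Definition children (F : forest) (p : {set X}) : {set {set X}} :=
  [set c in clusters F | is_parent F c p].

Definition degree (F : forest) (p : {set X}) : nat :=
  #|children F p| + (if has_parent F p then 1 else 0).

Definition siblings (F : forest) (x y : X) : Prop :=
  exists p, is_parent F (lv F x) p /\ is_parent F (lv F y) p.

Definition sibling_set (F : forest) (S : {set X}) : Prop :=
  forall x y, x \in S -> y \in S -> x != y -> siblings F x y.

Definition max_sibling_set (F : forest) (S : {set X}) : Prop :=
  sibling_set F S /\
  exists p, [/\ p \in clusters F,
                (forall x, x \in S -> is_parent F (lv F x) p) &
                degree F p = (if has_parent F p then #|S| + 1 else #|S|)].

(* Deleting the edge between vertex C and its parent, in the component with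
   label set B, followed by forced contraction. *)
Definition del_edge (F : forest) (B C : {set X}) : forest :=
  ((blocks F :\ B) :|: [set C; B :\: C],
   [set D in clusters F | ~~ (D \subset B)]
   :|: (([set D :&: C | D in [set D in clusters F | D \subset B]]
        :|: [set D :&: (B :\: C) | D in [set D in clusters F | D \subset B]])
        :\ set0)).

(* G is obtained from F by deleting one edge (then forced contraction);
   every edge of F joins a non-root vertex C to its parent. *)
Definition edge_del (F G : forest) : Prop :=
  exists B C, [/\ B \in blocks F, C \in clusters F, C \proper B &
                  G = del_edge F B C].

Inductive subforest : forest -> forest -> Prop :=
| subforest_refl F : subforest F F
| subforest_step F G H : edge_del F G -> subforest H G -> subforest H F.

Definition Ord (F : forest) : nat := #|blocks F|.

Definition agreement_forest (F1 F2 F : forest) : Prop :=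
  [/\ is_forest F, subforest F F1 & subforest F F2].

Definition maximal_agreement_forest (F1 F2 F : forest) : Prop :=
  agreement_forest F1 F2 F /\
  ~ (exists F', [/\ agreement_forest F1 F2 F', subforest F F' & Ord F' < Ord F]).

End Forests.

(* Main.v *)
Require Import Defs.
From mathcomp Require Import all_boot.
Set Implicit Arguments. Unset Strict Implicit. Unset Printing Implicit Defensive.

Section Pf.
Variables (X : finType) (rho : X).
Implicit Types (F G H : forest X) (P Q : {set {set X}}) (A B C D K L E : {set X}).

Definition rcl F0 Q : {set {set X}} := [set D :&: K | D in clusters F0, K in Q] :\ set0.
Definition restr F0 Q : forest X := (Q, rcl F0 Q).

Definition part Q := [/\ forall x, exists2 K, K \in Q & x \in K,
  forall K L x, K \in Q -> L \in Q -> x \in K -> x \in L -> K = L &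
  set0 \notin Q].

Definition refines P Q := forall K, K \in P -> exists2 B, B \in Q & K \subset B.

Definition Inv F1 G := [/\ part (blocks G), refines (blocks G) (blocks F1) &
   clusters G = rcl F1 (blocks G)].

Definition split Q B C : {set {set X}} := (Q :\ B) :|: [set C; B :\: C].

Lemma rclP F0 Q E : reflect (E != set0 /\ exists2 D, D \in clusters F0 & exists2 K, K \in Q & E = D :&: K)
   (E \in rcl F0 Q).
Proof.
rewrite /rcl in_setD1; apply: (iffP idP).
  case/andP=> nE /imset2P [D K HD HK EDK].
  by split=> //; exists D => //; exists K.
case=> nE [D HD [K HK EDK]].
by rewrite nE /=; apply/imset2P; rewrite EDK; exact: (Imset2spec HD HK).
Qed.

Lemma part_partition Q : part Q -> partition Q [set: X].
Proof.
case=> cov uni n0; apply/and3P; split=> //.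
  apply/eqP/setP=> x; rewrite inE; case: (cov x) => K HK xK.
  by apply/bigcupP; exists K.
apply/trivIsetP=> K L HK HL nKL; apply/pred0P=> x /=; apply/negbTE/negP=> /andP [xK xL].
by move/eqP: nKL; apply; apply: uni xK xL.
Qed.

Lemma partition_part Q : partition Q [set: X] -> part Q.
Proof.
case/and3P=> /eqP cov tI n0; split=> //.
  move=> x; have : x \in cover Q by rewrite cov inE.
  by case/bigcupP=> K HK xK; exists K.
move=> K L x HK HL xK xL; apply/eqP; apply/negPn/negP=> nKL.
have := trivIsetP tI K L HK HL nKL.
by move/pred0P/(_ x) => /=; rewrite xK xL.
Qed.


Lemma part_uniq Q K L x : part Q -> K \in Q -> L \in Q -> x \in K -> x \in L -> K = L.
Proof. by case=> _ u _; apply: u. Qed.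

Lemma forest_part F : is_forest rho F -> part (blocks F).
Proof. by case=> [[pF _ _ _ _] _]; apply: partition_part. Qed.

Lemma rcl_n0 F0 Q E : E \in rcl F0 Q -> E != set0.
Proof. by case/rclP. Qed.

Lemma inv_init F1 : is_forest rho F1 -> Inv F1 F1.
Proof.
move=> fF; have pF := forest_part fF.
case: fF => [[_ csub _ _ _] [cn0 _]].
split=> //; first by move=> K HK; exists K.
apply/setP=> E; apply/idP/rclP.
  move=> HE; split; first exact: cn0.
  case: (csub E HE) => B HB sEB; exists E => //; exists B => //.
  by apply/esym/setIidPl.
case=> nE [D HD [K HK EDK]].
case: (csub D HD) => B HB sDB.
case/set0Pn: nE => x; rewrite EDK inE => /andP [xD xK].
have eBK : B = K by apply: (part_uniq pF HB HK) (subsetP sDB x xD) xK.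
by rewrite -eBK (setIidPl sDB).
Qed.

Lemma del_rcl F0 G B C : part (blocks G) -> clusters G = rcl F0 (blocks G) ->
  B \in blocks G -> C \subset B ->
  clusters (del_edge G B C) = rcl F0 (split (blocks G) B C).
Proof.
move=> pG clG HB sCB; rewrite /del_edge /clusters /=.
apply/setP=> E; apply/idP/idP.
  rewrite in_setU in_setD1 in_setU.
  case/orP=> [|/andP [nE /orP [|]]].
  - rewrite inE => /andP [EG nEB]; move: EG; rewrite -/(clusters G) clG.
    case/rclP=> nE [D HD [K HK EDK]]; apply/rclP; split=> //; exists D => //.
    exists K => //; rewrite /split in_setU in_setD1 HK andbT; apply/orP; left.
    by apply/eqP=> eKB; move: nEB; rewrite EDK eKB subsetIr.
  - case/imsetP=> D' HD' ED'; move: HD'; rewrite inE => /andP [HD' sD'B].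
    move: HD'; rewrite -/(clusters G) clG; case/rclP=> nD' [D HD [K HK EDK]].
    apply/rclP; split=> //.
    exists D => //; exists C; first by rewrite /split in_setU !inE eqxx orbT.
    case/set0Pn: nD' => x xD'.
    have xK : x \in K by move: xD'; rewrite EDK inE => /andP [].
    have eKB : K = B := part_uniq pG HK HB xK (subsetP sD'B x xD').
    by rewrite ED' EDK eKB -setIA (setIidPr sCB).
  - case/imsetP=> D' HD' ED'; move: HD'; rewrite inE => /andP [HD' sD'B].
    move: HD'; rewrite -/(clusters G) clG; case/rclP=> nD' [D HD [K HK EDK]].
    apply/rclP; split=> //.
    exists D => //; exists (B :\: C); first by rewrite /split in_setU !inE eqxx !orbT.
    case/set0Pn: nD' => x xD'.
    have xK : x \in K by move: xD'; rewrite EDK inE => /andP [].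
    have eKB : K = B := part_uniq pG HK HB xK (subsetP sD'B x xD').
    by rewrite ED' EDK eKB -setIA (setIidPr (subsetDl B C)).
case/rclP=> nE [D HD [K HK EDK]].
move: HK; rewrite /split in_setU in_setD1 !inE => /orP [/andP [nKB HK]|/orP [/eqP eK|/eqP eK]].
  apply/orP; left; rewrite -[G.2]/(clusters G) clG; apply/andP; split.
    by apply/rclP; split=> //; exists D => //; exists K.
  apply/negP=> sEB; case/set0Pn: nE => x xE.
  have xK : x \in K by move: xE; rewrite EDK inE => /andP [].
  by move/eqP: nKB; apply; apply: (part_uniq pG HK HB xK (subsetP sEB x xE)).
- rewrite nE /=; apply/orP; right; apply/orP; left.
  apply/imsetP; exists (D :&: B); last by rewrite EDK eK -setIA (setIidPr sCB).
  rewrite inE subsetIr andbT -[G.2]/(clusters G) clG; apply/rclP; split.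
    apply: contraNneq nE => e0; apply/eqP; apply/setP=> y; rewrite EDK eK !inE.
    by apply/negbTE/negP=> /andP [yD yC]; move/setP/(_ y): e0; rewrite !inE yD (subsetP sCB y yC).
  by exists D => //; exists B.
- rewrite nE /=; apply/orP; right; apply/orP; right.
  apply/imsetP; exists (D :&: B); last by rewrite EDK eK -setIA (setIidPr (subsetDl B C)).
  rewrite inE subsetIr andbT -[G.2]/(clusters G) clG; apply/rclP; split.
    apply: contraNneq nE => e0; apply/eqP; apply/setP=> y; rewrite EDK eK !inE.
    by apply/negbTE/negP=> /and3P [yD yC yB]; move/setP/(_ y): e0; rewrite !inE yD yB.
  by exists D => //; exists B.
Qed.


Lemma mem_split Q B C K : K \in split Q B C ->
  [\/ (K \in Q) && (K != B), K = C | K = B :\: C].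
Proof.
rewrite /split in_setU in_setD1 !inE => /orP [/andP [n h]|/orP [/eqP->|/eqP->]].
- by apply: Or31; rewrite h n.
- exact: Or32.
- exact: Or33.
Qed.

Lemma split_mem Q B C K : [\/ (K \in Q) && (K != B), K = C | K = B :\: C] ->
  K \in split Q B C.
Proof.
rewrite /split in_setU in_setD1 !inE.
by case=> [/andP [h n]|->|->]; rewrite ?h ?n ?eqxx ?orbT.
Qed.

Lemma part_split Q B C : part Q -> B \in Q -> C \subset B -> C != set0 ->
  B :\: C != set0 -> part (split Q B C).
Proof.
move=> pQ HB sCB nC nBC; split.
- move=> x; case: pQ => cov _ _; case: (cov x) => K HK xK.
  case: (eqVneq K B) => [eKB|nKB].
    case: (boolP (x \in C)) => xC.
      by exists C => //; apply: split_mem; apply: Or32.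
    by exists (B :\: C); [apply: split_mem; apply: Or33 | rewrite inE xC -eKB xK].
  by exists K => //; apply: split_mem; apply: Or31; rewrite HK nKB.
- move=> K L x /mem_split HK /mem_split HL xK xL.
  have inB : forall K', K' = C \/ K' = B :\: C -> K' \subset B.
    by move=> K' [->|->] //; apply: subsetDl.
  case: HK => [/andP [HK nKB]|eK|eK]; case: HL => [/andP [HL nLB]|eL|eL].
  + exact: (part_uniq pQ HK HL xK xL).
  + by move/eqP: nKB; case; apply: (part_uniq pQ HK HB xK); move: xL; rewrite eL; apply/subsetP.
  + by move/eqP: nKB; case; apply: (part_uniq pQ HK HB xK); move: xL; rewrite eL; apply/subsetP/subsetDl.
  + by move/eqP: nLB; case; apply: (part_uniq pQ HL HB xL); move: xK; rewrite eK; apply/subsetP.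
  + by rewrite eK eL.
  + by move: xK xL; rewrite eK eL inE => ->.
  + by move/eqP: nLB; case; apply: (part_uniq pQ HL HB xL); move: xK; rewrite eK; apply/subsetP/subsetDl.
  + by move: xK xL; rewrite eK eL inE => /andP [/negbTE ->].
  + by rewrite eK eL.
- apply/negP=> /mem_split [/andP [h _]| e | e].
  + by case: pQ => _ _ /negP; apply.
  + by move/eqP: nC; apply; rewrite e.
  + by move/eqP: nBC; apply; rewrite e.
Qed.

Lemma inv_step F1 G G2 : Inv F1 G -> edge_del G G2 -> Inv F1 G2.
Proof.
case=> pG rG clG [B [C [HB HC pCB ->]]].
have sCB := proper_sub pCB.
have nC : C != set0 by move: HC; rewrite clG => /rcl_n0.
have nBC : B :\: C != set0.
  case/properP: pCB => _ [x xB xC]; apply/set0Pn; exists x; by rewrite inE xC xB.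
split.
- exact: part_split.
- move=> K /mem_split [/andP [HK _]|eK|eK]; first exact: rG.
  + case: (rG B HB) => B' HB' sBB'; exists B' => //; rewrite eK; exact: subset_trans sCB sBB'.
  + case: (rG B HB) => B' HB' sBB'; exists B' => //; rewrite eK; exact: subset_trans (subsetDl B C) sBB'.
- exact: del_rcl.
Qed.

Lemma inv_sub F1 G H : Inv F1 G -> subforest H G -> Inv F1 H.
Proof.
move=> iG sHG; elim: sHG iG => // F G' H' eFG _ IH iF.
exact: IH (inv_step iF eFG).
Qed.

Definition together G x y := exists2 K, K \in blocks G & (x \in K) && (y \in K).

Lemma together_back G H x y : subforest H G -> together H x y -> together G x y.
Proof.
elim=> // F G' H' [B [C [HB HC pCB eG]]] _ IH /IH [K HK /andP [xK yK]].
move: HK; rewrite eG => /mem_split [/andP [HK _]|eK|eK].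
- by exists K => //; rewrite xK yK.
- exists B => //; rewrite eK in xK yK.
  by rewrite (subsetP (proper_sub pCB) x xK) (subsetP (proper_sub pCB) y yK).
- exists B => //; rewrite eK !inE in xK yK.
  by case/andP: xK => _ ->; case/andP: yK => _ ->.
Qed.


Lemma part_pblock Q x : part Q -> pblock Q x \in Q /\ x \in pblock Q x.
Proof.
move=> /part_partition /and3P [/eqP cov _ _].
by rewrite pblock_mem ?mem_pblock cov inE.
Qed.

Lemma part_pblockE Q K x : part Q -> K \in Q -> x \in K -> pblock Q x = K.
Proof.
move=> pQ HK xK; case: (part_pblock x pQ) => h1 h2.
exact: part_uniq pQ h1 HK h2 xK.
Qed.

Lemma disj_pt A B : (forall x, x \in A -> x \in B -> False) -> [disjoint A & B].
Proof.
move=> h; rewrite -setI_eq0; apply/eqP/setP=> y; rewrite !inE.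
by apply/negbTE/negP=> /andP [ya yb]; apply: (h y).
Qed.

Lemma restr_forest F1 P : is_forest rho F1 -> part P -> refines P (blocks F1) ->
  is_forest rho (restr F1 P).
Proof.
move=> fF pP rP; have pF := forest_part fF.
case: fF => [[_ csub bsub sing lam] [cn0 [rh1 rh2]]].
set B0 := rho_block rho F1.
have [HB0 rB0] : B0 \in blocks F1 /\ rho \in B0 by apply: part_pblock.
have [HK0 rK0] := part_pblock rho pP.
have sK0 : pblock P rho \subset B0.
  case: (rP _ HK0) => B HB sKB.
  by rewrite /B0 /rho_block (part_pblockE pF HB (subsetP sKB _ rK0)).
rewrite /is_forest /rho_block /blocks /clusters /=.
split; [split|split; [|split]].
- exact: part_partition.
- by move=> C /rclP [_ [D _ [K HK ->]]]; exists K => //; apply: subsetIr.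
- move=> K HK; apply/rclP; split; first by apply/negP=> /eqP e; case: pP => _ _ /negP; apply; rewrite -e.
  case: (rP K HK) => B HB sKB; exists B; first exact: bsub.
  by exists K => //; apply/esym/setIidPr.
- move=> x nx; apply/rclP; split; first by apply/set0Pn; exists x; rewrite inE.
  exists [set x]; first exact: sing.
  have [h1 h2] := part_pblock x pP; exists (pblock P x) => //.
  by apply/esym/setIidPl; rewrite sub1set.
- move=> C E /rclP [_ [D HD [K HK ->]]] /rclP [_ [D' HD' [L HL ->]]].
  case: (eqVneq K L) => [<-|nKL].
    case/or3P: (lam D D' HD HD') => h.
    + by rewrite setSI.
    + by rewrite orbC setSI.
    + apply/orP; right; apply/orP; right; apply: disj_pt => y; rewrite !inE => /andP [yD _] /andP [yD' _].
      by move/pred0P/(_ y): h => /=; rewrite yD yD'.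
  apply/orP; right; apply/orP; right; apply: disj_pt => y; rewrite !inE => /andP [_ yK] /andP [_ yL].
  by move/eqP: nKL; apply; apply: part_uniq pP HK HL yK yL.
- exact: rcl_n0.
- move=> C /rclP [_ [D HD [K HK ->]]]; rewrite inE => /andP [rD rK].
  have eD : D = B0 := rh1 D HD rD.
  by rewrite eD; rewrite (part_pblockE pP HK rK) in sK0 *; apply/setIidPr.
- move=> nK0; apply/rclP; split.
    apply/negP=> /eqP h; move/eqP: nK0; apply; apply/eqP; rewrite eqEsubset sub1set rK0 andbT.
    apply/subsetP=> y yK; rewrite inE; apply/negPn/negP=> ny.
    by move/setP/(_ y): h; rewrite !inE ny yK.
  have nB0 : B0 != [set rho].
    apply/negP=> /eqP e; move/eqP: nK0; apply; apply/eqP; rewrite eqEsubset sub1set rK0 andbT -e //.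
  exists (B0 :\ rho); first exact: rh2.
  exists (pblock P rho) => //; apply/setP=> y; rewrite !inE.
  by case: (boolP (y \in pblock P rho)) => yK; rewrite ?andbF // (subsetP sK0 y yK) !andbT.
Qed.


Section Phi.
Variables (a c : X).

Definition gf K := (K :\ c) :|: (if a \in K then [set c] else set0).
Definition phi Q := [set gf K | K in Q] :\ set0.

Lemma in_gf K y : (y \in gf K) = if y == c then a \in K else y \in K.
Proof.
rewrite /gf in_setU in_setD1. case: (eqVneq y c) => [->|ny].
  by case: (a \in K); rewrite ?inE ?eqxx.
by case: (a \in K); rewrite ?inE ?orbF ?ny //= (negbTE ny) ?orbF.
Qed.

Lemma gfD B C : gf (B :\: C) = gf B :\: gf C.
Proof. by apply/setP=> y; rewrite !(in_gf, inE); case: (y == c); rewrite ?inE. Qed.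

Lemma gfS C B : C \subset B -> gf C \subset gf B.
Proof.
move=> sCB; apply/subsetP=> y; rewrite !in_gf; case: (y == c); exact: (subsetP sCB).
Qed.

Lemma gf_inj Q K L : part Q -> K \in Q -> L \in Q -> gf K = gf L -> gf K != set0 -> K = L.
Proof.
move=> pQ HK HL e /set0Pn [y yK]; have yL : y \in gf L by rewrite -e.
move: yK yL; rewrite !in_gf; case: (y == c) => yK yL; exact: part_uniq pQ HK HL yK yL.
Qed.

Lemma phiP Q K' : reflect (K' != set0 /\ exists2 K, K \in Q & K' = gf K) (K' \in phi Q).
Proof.
rewrite /phi in_setD1; apply: (iffP andP) => [[n /imsetP [K HK e]]|[n [K HK e]]].
  by split=> //; exists K.
by split=> //; apply/imsetP; exists K.
Qed.

Lemma part_phi Q : part Q -> part (phi Q).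
Proof.
move=> pQ; split.
- move=> x; case: pQ => cov _ _.
  case: (eqVneq x c) => [->|nx].
    case: (cov a) => K HK aK; exists (gf K); last by rewrite in_gf eqxx.
    apply/phiP; split; last by exists K.
    by apply/set0Pn; exists c; rewrite in_gf eqxx.
  case: (cov x) => K HK xK; exists (gf K); last by rewrite in_gf (negbTE nx).
  apply/phiP; split; last by exists K.
  by apply/set0Pn; exists x; rewrite in_gf (negbTE nx).
- move=> K' L' x /phiP [_ [K HK ->]] /phiP [_ [L HL ->]]; rewrite !in_gf.
  by case: (x == c) => xK xL; rewrite (part_uniq pQ HK HL xK xL).
- by rewrite /phi !inE eqxx.
Qed.

Lemma phi_split_skip Q B C : part Q -> B \in Q -> C \subset B ->
  (gf C = set0 \/ gf (B :\: C) = set0) -> phi (split Q B C) = phi Q.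
Proof.
move=> pQ HB sCB h.
have e1 : gf C = set0 -> gf (B :\: C) = gf B by move=> e; rewrite gfD e setD0.
have e2 : gf (B :\: C) = set0 -> gf C = gf B.
  move=> e; have : gf (B :\: (B :\: C)) = gf B by rewrite gfD e setD0.
  by rewrite setDDr setDv set0U (setIidPr sCB).
apply/setP=> K'; apply/phiP/phiP => [[n [K /mem_split HK eK]]|[n [K HK eK]]].
  split=> //; case: HK => [/andP [HK _]|e|e]; first by exists K.
  + exists B => //; rewrite eK e; case: h => h; first by move: n; rewrite eK e h eqxx.
    exact: e2.
  + exists B => //; rewrite eK e; case: h => h; last by move: n; rewrite eK e h eqxx.
    exact: e1.
split=> //; case: (eqVneq K B) => [eKB|nKB].
  case: h => h.
    by exists (B :\: C); [apply: split_mem; apply: Or33 | rewrite eK eKB e1].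
  by exists C; [apply: split_mem; apply: Or32 | rewrite eK eKB e2].
by exists K => //; apply: split_mem; apply: Or31; rewrite HK nKB.
Qed.

Lemma phi_split Q B C : part Q -> B \in Q -> C \subset B ->
  gf C != set0 -> gf (B :\: C) != set0 ->
  phi (split Q B C) = split (phi Q) (gf B) (gf C).
Proof.
move=> pQ HB sCB nC nBC.
apply/setP=> K'; apply/phiP/idP => [[n [K /mem_split HK eK]]|/mem_split HK'].
  apply: split_mem; case: HK => [/andP [HK nKB]|e|e].
  + apply: Or31; apply/andP; split; first by apply/phiP; split=> //; exists K.
    apply/eqP=> e; move/eqP: nKB; apply; apply: gf_inj pQ HK HB _ _; rewrite -eK //.
  + by apply: Or32; rewrite eK e.
  + by apply: Or33; rewrite eK e gfD.
case: HK' => [/andP [/phiP [n [K HK eK]] nK]|e|e].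
- split=> //; exists K => //; apply: split_mem; apply: Or31; rewrite HK /=.
  by apply: contraNneq nK => e; rewrite eK e.
- by split; [rewrite e | exists C => //; apply: split_mem; apply: Or32].
- by split; [rewrite e -gfD | exists (B :\: C); [apply: split_mem; apply: Or33 | rewrite e gfD]].
Qed.

End Phi.


Lemma cl_block F1 G B C : Inv F1 G -> B \in blocks G -> C \in clusters G -> C \subset B ->
  exists2 D, D \in clusters F1 & C = D :&: B.
Proof.
case=> pG _ clG HB; rewrite clG => /rclP [n [D HD [K HK eC]]] sCB.
exists D => //; case/set0Pn: n => x xC.
have xK : x \in K by move: xC; rewrite eC inE => /andP [].
by rewrite (part_uniq pG HB HK (subsetP sCB x xC) xK).
Qed.

Lemma same_block Q C x y : part Q -> C \in Q -> (exists2 K, K \in Q & (x \in K) && (y \in K)) ->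
  x \in C -> y \in C.
Proof.
move=> pQ HC [K HK /andP [xK yK]] xC.
by rewrite (part_uniq pQ HC HK xC xK).
Qed.

Section Lift.
Variables (a b c : X) (F1 : forest X).
Hypotheses (Hab : a != b) (Hac : a != c).
Hypothesis P1 : forall D, D \in clusters F1 -> a \in D -> b \in D -> c \in D.
Hypothesis P2 : forall D, D \in clusters F1 -> c \in D -> D != [set c] -> a \in D.

Lemma gf_cl D B C : D \in clusters F1 -> C = D :&: B -> gf a c C != set0 ->
  (a \in C -> b \in C) -> gf a c C = D :&: gf a c B.
Proof.
move=> HD eC nC abC; apply/setP=> y; rewrite in_setI !in_gf.
case: (eqVneq y c) => [->|ny]; last by rewrite eC inE.
apply/idP/idP.
  move=> aC; have bC := abC aC; move: aC bC; rewrite eC !inE => /andP [aD aB] /andP [bD _].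
  by rewrite (P1 HD aD bD) aB.
case/andP=> cD aB; rewrite eC inE aB andbT; apply/negPn/negP=> naD.
have eD : D = [set c].
  by apply/eqP; apply/negPn/negP=> nD; move: naD; rewrite (P2 HD cD nD).
move/eqP: nC; apply; apply/setP=> z; rewrite in_gf eC eD !inE.
case: (eqVneq z c) => [_|nz]; last by rewrite andFb.
by apply/negbTE/negP=> /andP [/eqP eac _]; move: Hac; rewrite eac eqxx.
Qed.

Lemma del_edgeE G B C : del_edge G B C = (split (blocks G) B C, clusters (del_edge G B C)).
Proof. by []. Qed.

Lemma lift G H : Inv F1 G -> subforest H G -> together H a b ->
  subforest (restr F1 (phi a c (blocks H))) (restr F1 (phi a c (blocks G))).
Proof.
move=> iG sHG; elim: sHG iG => [F _ _|F G' H' eFG sHG' IH iF tab]; first exact: subforest_refl.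
have iG' := inv_step iF eFG.
have tG' : together G' a b := together_back sHG' tab.
have := IH iG' tab; case: eFG => [B [C [HB HC pCB eG']]].
have sCB := proper_sub pCB.
case: (iF) => pF _ _.
have bG' : blocks G' = split (blocks F) B C by rewrite eG'.
rewrite bG'.
case: (boolP ((gf a c C != set0) && (gf a c (B :\: C) != set0))) => [/andP [nC nBC]|h].
  rewrite phi_split // => sub; apply: subforest_step sub.
  case: (cl_block iF HB HC sCB) => D HD eC.
  have pG' : part (split (blocks F) B C) by case: iG'; rewrite bG'.
  have abC : a \in C -> b \in C.
    apply: (same_block pG'); first by apply: split_mem; apply: Or32.
    by rewrite -bG'.
  have egC := gf_cl HD eC nC abC.
  exists (gf a c B), (gf a c C); split.
  - apply/phiP; split; last by exists B.
    by apply: contraNneq nC => e; apply/eqP; apply/eqP; rewrite -subset0 -e gfS.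
  - apply/rclP; split=> //; exists D => //; exists (gf a c B) => //.
    apply/phiP; split; last by exists B.
    by apply: contraNneq nC => e; apply/eqP; apply/eqP; rewrite -subset0 -e gfS.
  - rewrite properEneq gfS // andbT; apply: contraNneq nBC => e.
    by rewrite gfD e setDv.
  - rewrite del_edgeE; congr pair.
    rewrite (@del_rcl F1 (restr F1 (phi a c (blocks F))) _ _ (part_phi a c pF) (erefl _)) //.
      apply/phiP; split; last by exists B.
      by apply: contraNneq nC => e; apply/eqP; apply/eqP; rewrite -subset0 -e gfS.
    by rewrite egC subsetIr.
rewrite phi_split_skip //.
by move: h; rewrite negb_and !negbK => /orP [/eqP|/eqP]; [left|right].
Qed.

Lemma sep G H : Inv F1 G -> subforest H G -> together H a b ->
  (together G a c \/ [set c] \in blocks G) -> (together H a c \/ [set c] \in blocks H).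
Proof.
move=> iG sHG; elim: sHG iG => [F _ _ //|F G' H' eFG sHG' IH iF tab hF].
have iG' := inv_step iF eFG.
have tG' : together G' a b := together_back sHG' tab.
apply: (IH iG' tab); case: eFG => [B [C [HB HC pCB eG']]].
have sCB := proper_sub pCB.
case: (iF) => pF _ clF.
have nC : C != set0 by move: HC; rewrite clF => /rcl_n0.
have bG' : blocks G' = split (blocks F) B C by rewrite eG'.
have pG' : part (split (blocks F) B C) by case: iG'; rewrite bG'.
rewrite /together bG'.
case: hF => [[K HK /andP [aK cK]]|hc].
  case: (eqVneq K B) => [eKB|nKB]; last first.
    by left; exists K; [apply: split_mem; apply: Or31; rewrite HK nKB | rewrite aK cK].
  rewrite eKB in aK cK.
  case: (cl_block iF HB HC sCB) => D HD eC.
  have abC : a \in C -> b \in C.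
    apply: (same_block pG'); first by apply: split_mem; apply: Or32.
    by move: tG'; rewrite /together bG'.
  case: (boolP (a \in C)) => aC; case: (boolP (c \in C)) => cC.
  - by left; exists C; [apply: split_mem; apply: Or32 | rewrite aC cC].
  - have bC := abC aC; move: aC bC cC; rewrite eC !inE => /andP [aD _] /andP [bD _].
    by rewrite (P1 HD aD bD) cK.
  - have cD : c \in D by move: cC; rewrite eC inE => /andP [].
    have eD : D = [set c].
      apply/eqP; apply/negPn/negP=> nD; move: aC; rewrite eC inE (P2 HD cD nD) aK //.
    right; apply: split_mem; apply: Or32; rewrite eC eD.
    by apply/setP=> z; rewrite !inE; case: (eqVneq z c) => [->|] //; rewrite cK.
  - by left; exists (B :\: C); [apply: split_mem; apply: Or33 | rewrite !inE aC cC aK cK].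
right; apply: split_mem; apply: Or31; rewrite hc /=.
apply/eqP=> e; move: pCB; rewrite -e properEneq => /andP [nCc].
rewrite subset1 (negbTE nCc) /= => /eqP e0; by move/eqP: nC.
Qed.

End Lift.


Lemma card_split Q B C : part Q -> B \in Q -> C \subset B -> C != set0 ->
  B :\: C != set0 -> #|split Q B C| = #|Q|.+1.
Proof.
move=> pQ HB sCB nC nBC.
have e0 : (Q :\ B) :&: [set C; B :\: C] = set0.
  apply/setP=> K; rewrite !inE; apply/negbTE/negP=> /andP [/andP [nKB HK] /orP h].
  have [sKB nK] : K \subset B /\ K != set0.
    by case: h => /eqP ->; split=> //; apply: subsetDl.
  case/set0Pn: nK => x xK; move/eqP: nKB; apply.
  exact: part_uniq pQ HK HB xK (subsetP sKB x xK).
have nCBC : C != B :\: C.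
  apply/negP=> /eqP e; case/set0Pn: nC => x xC.
  by move: (xC); rewrite e inE => /andP [] /negP.
rewrite /split cardsU e0 cards0 subn0 cards2 nCBC (cardsD1 B Q) HB.
by rewrite addn2 add1n.
Qed.

Lemma restr_eta F0 G : Inv F0 G -> restr F0 (blocks G) = G.
Proof. by case: G => Q Cl [_ _ /= e]; rewrite /restr /= -e. Qed.

Lemma gf_Ka a c K : a \in K -> gf a c K = c |: K.
Proof. by move=> aK; apply/setP=> y; rewrite in_gf !inE; case: (y == c). Qed.

Lemma gf_c a c : a != c -> gf a c [set c] = set0.
Proof.
move=> ac; apply/setP=> y; rewrite in_gf !inE; case: (eqVneq y c) => [_|nyc] //.
exact: negbTE.
Qed.

Lemma gf_id a c K : a \notin K -> c \notin K -> gf a c K = K.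
Proof.
move=> aK cK; apply/setP=> y; rewrite in_gf; case: (eqVneq y c) => [->|] //.
by rewrite (negbTE aK) (negbTE cK).
Qed.

Lemma phi_id Q a c : part Q -> (exists2 K, K \in Q & (a \in K) && (c \in K)) -> phi a c Q = Q.
Proof.
move=> pQ [Ka HKa /andP [aK cK]].
have gid : forall K, K \in Q -> gf a c K = K.
  move=> K HK; case: (eqVneq K Ka) => [->|nK]; first by rewrite gf_Ka //; apply/setUidPr; rewrite sub1set.
  apply: gf_id; apply/negP=> h; move/eqP: nK; apply; exact: part_uniq pQ HK HKa h _.
apply/setP=> K; apply/phiP/idP => [[_ [K' HK' ->]]|HK]; first by rewrite gid.
split; last by exists K => //; rewrite gid.
by apply/negP=> /eqP e; case: pQ => _ _ /negP; apply; rewrite -e.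
Qed.


Section Fin.
Variables (a b c : X) (P : {set {set X}}) (Ka : {set X}).
Hypotheses (pP : part P) (HKa : Ka \in P) (aK : a \in Ka) (bK : b \in Ka)
  (cK : c \notin Ka) (Hc : [set c] \in P).

Lemma ac_ne : a != c.
Proof. by apply: contraNneq cK => <-. Qed.

Lemma other_notin K : K \in P -> K != Ka -> K != [set c] -> (a \notin K) && (c \notin K).
Proof.
move=> HK n1 n2; apply/andP; split; apply/negP=> h.
  by move/eqP: n1; apply; apply: part_uniq pP HK HKa h aK.
by move/eqP: n2; apply; apply: part_uniq pP HK Hc h _; rewrite inE.
Qed.

Lemma phi_memE K' : (K' \in phi a c P) = (K' == c |: Ka) || [&& K' \in P, K' != Ka & K' != [set c]].
Proof.
apply/phiP/idP => [[n [K HK eK]]|].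
  rewrite eK in n *.
  case: (eqVneq K Ka) => [->|n1]; first by rewrite gf_Ka // eqxx.
  case: (eqVneq K [set c]) => [e|n2]; first by move: n; rewrite e (gf_c ac_ne); move/eqP.
  case/andP: (other_notin HK n1 n2) => h1 h2; by rewrite gf_id // HK n1 n2 orbT.
case/orP=> [/eqP ->|/and3P [HK n1 n2]].
  split; first by apply/set0Pn; exists c; rewrite !inE eqxx.
  by exists Ka => //; rewrite gf_Ka.
split; first by apply/negP=> /eqP e; case: pP => _ _ /negP; apply; rewrite -e.
by exists K' => //; case/andP: (other_notin HK n1 n2) => h1 h2; rewrite gf_id.
Qed.

Lemma split_back : split (phi a c P) (c |: Ka) [set c] = P.
Proof.
apply/setP=> K; apply/idP/idP => [/mem_split [/andP [h n]|->|->] //|HK].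
- move: h; rewrite phi_memE (negbTE n) /= => /and3P [] //.
- have -> : (c |: Ka) :\: [set c] = Ka.
    apply/setP=> y; rewrite !inE; case: (eqVneq y c) => [->|] //=.
    by rewrite (negbTE cK).
  by [].
apply: split_mem; case: (eqVneq K Ka) => [->|n1].
  apply: Or33; apply/setP=> y; rewrite !inE; case: (eqVneq y c) => [->|] //=.
  by rewrite (negbTE cK).
case: (eqVneq K [set c]) => [->|n2]; first exact: Or32.
apply: Or31; rewrite phi_memE HK n1 n2 orbT /=.
apply/negP=> /eqP e; case/andP: (other_notin HK n1 n2) => _ /negP; apply.
by rewrite e !inE eqxx.
Qed.

Definition hf E := if (a \in E) && (b \in E) then c |: E else E.

Lemma rcl_phi F0 :
  (forall D, D \in clusters F0 -> a \in D -> b \in D -> c \in D) ->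
  (forall D, D \in clusters F0 -> c \in D -> D != [set c] -> (a \in D) && (b \in D)) ->
  [set c] \in clusters F0 ->
  rcl F0 (phi a c P) = [set hf E | E in rcl F0 P].
Proof.
move=> Q1 Q2 Hcc.
have ca : c != a by rewrite eq_sym ac_ne.
apply/setP=> Z; apply/rclP/imsetP => [[nX [D HD [K' HK' eX]]]|[E /rclP [nE [D HD [K HK eE]]] eX]].
  move: HK'; rewrite phi_memE => /orP [/eqP eK'|/and3P [HK n1 n2]].
    case: (eqVneq (D :&: Ka) set0) => [e0|/set0Pn nE].
      exists [set c]; last first.
        rewrite /hf !inE (negbTE ac_ne) /=.
        apply/eqP; rewrite eqEsubset; apply/andP; split.
          apply/subsetP=> y; rewrite eX eK' !inE => /andP [yD /orP [//|yK]].
          by move/setP/(_ y): e0; rewrite !inE yD yK.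
        rewrite sub1set; case/set0Pn: nX => y; rewrite eX eK' !inE => /andP [yD].
        case: (eqVneq y c) => [eyc|nyc] /=; first by rewrite -eyc yD eqxx.
        by move=> yK; move/setP/(_ y): e0; rewrite !inE yD yK.
      apply/rclP; split; first by apply/set0Pn; exists c; rewrite inE.
      by exists [set c] => //; exists [set c] => //; rewrite setIid.
    exists (D :&: Ka).
      by apply/rclP; split; [apply/set0Pn | exists D => //; exists Ka].
    rewrite /hf !inE aK bK !andbT eX eK'.
    case: (boolP (c \in D)) => cD.
      have nD : D != [set c].
        apply/negP=> /eqP eD; case: nE => y; rewrite eD !inE => /andP [/eqP -> h].
        by move: cK; rewrite h.
      case/andP: (Q2 D HD cD nD) => -> -> /=.
      by apply/setP=> y; rewrite !inE; case: (eqVneq y c) => [->|]; rewrite ?cD //.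
    case: (boolP ((a \in D) && (b \in D))) => [/andP [aD bD]|_].
      by move: cD; rewrite (Q1 D HD aD bD).
    apply/setP=> y; rewrite !inE; case: (eqVneq y c) => [->|]; rewrite ?(negbTE cD) //.
  case/andP: (other_notin HK n1 n2) => aK' cK'.
  exists Z; last first.
    rewrite /hf; have -> : (a \in Z) = false.
      by apply/negbTE; apply: contra aK'; rewrite eX inE => /andP [].
    by [].
  by apply/rclP; split=> //; exists D => //; exists K'.
rewrite eX /hf.
case: (eqVneq K Ka) => [eK|n1].
  case: (boolP ((a \in E) && (b \in E))) => [/andP [aE bE]|nab] /=.
    have cD : c \in D.
      by move: aE bE; rewrite eE !inE => /andP [aD _] /andP [bD _]; apply: Q1.
    split; first by apply/set0Pn; exists c; rewrite !inE eqxx.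
    exists D => //; exists (c |: Ka); first by rewrite phi_memE eqxx.
    by rewrite eE eK; apply/setP=> y; rewrite !inE; case: (eqVneq y c) => [->|]; rewrite ?cD.
  split=> //; exists D => //; exists (c |: Ka); first by rewrite phi_memE eqxx.
  have cD : c \notin D.
    apply/negP=> cD.
    have nD : D != [set c].
      apply/negP=> /eqP eD; case/set0Pn: nE => y; rewrite eE eK eD !inE => /andP [/eqP -> h].
      by move: cK; rewrite h.
    case/andP: (Q2 D HD cD nD) => aD bD; move: nab; rewrite eE eK !inE aD bD aK bK.
    by [].
  by rewrite eE eK; apply/setP=> y; rewrite !inE; case: (eqVneq y c) => [->|]; rewrite ?(negbTE cD).
case: (eqVneq K [set c]) => [eK|n2].
  have eE1 : E = [set c].
    apply/eqP; rewrite eqEsubset; apply/andP; split; first by rewrite eE eK subsetIr.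
    case/set0Pn: nE => y; rewrite eE eK !inE => /andP [yD /eqP ey]; rewrite ey in yD.
    by rewrite sub1set !inE yD eqxx.
  rewrite eE1 !inE (negbTE ac_ne) /=.
  split; first by apply/set0Pn; exists c; rewrite inE.
  exists [set c] => //; exists (c |: Ka); first by rewrite phi_memE eqxx.
  by apply/setP=> y; rewrite !inE; case: (eqVneq y c) => [->|] //; rewrite andbF.
case/andP: (other_notin HK n1 n2) => aK' cK'.
have -> : (a \in E) = false.
  by apply/negbTE; apply: contra aK'; rewrite eE inE => /andP [].
split=> //; exists D => //; exists K => //; by rewrite phi_memE HK n1 n2 orbT.
Qed.

End Fin.


Lemma parP F x p : is_parent F [set x] p ->
  [/\ p \in clusters F, x \in p, p != [set x] &
      forall D, D \in clusters F -> x \in D -> D != [set x] -> p \subset D].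
Proof.
case/and3P=> Hp; rewrite properEneq => /andP [n s] /forallP h.
split=> //; first by rewrite -sub1set.
  by rewrite eq_sym.
move=> D HD xD nD; move/implyP: (h D); apply; rewrite HD properEneq eq_sym nD /=.
by rewrite sub1set.
Qed.

Lemma lv_ne F x : x != rho -> lv rho F x = [set x].
Proof. by move=> nx; rewrite /lv (negbTE nx). Qed.

Lemma rho_notin F x p : is_forest rho F -> is_parent F (lv rho F x) p -> x != rho.
Proof.
move=> fF; apply: contraTneq => ->; rewrite /lv eqxx.
have pF := forest_part fF.
case: fF => [_ [_ [rh1 _]]].
apply/negP; case/and3P=> Hp pr _.
have rB : rho \in rho_block rho F by case: (part_pblock rho pF).
have := rh1 p Hp (subsetP (proper_sub pr) _ rB) => e.
by move: pr; rewrite e properE subxx andbF.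
Qed.

Lemma trio F a b c q q' : a != b ->
  is_parent F [set a] q -> is_parent F [set c] q ->
  is_parent F [set a] q' -> is_parent F [set b] q' ->
  (forall D, D \in clusters F -> a \in D -> b \in D -> c \in D) /\
  (forall D, D \in clusters F -> c \in D -> D != [set c] -> (a \in D) && (b \in D)).
Proof.
move=> nab /parP [Hq aq nqa hqa] /parP [_ cq _ hqc] /parP [Hq' aq' nq'a hq'a] /parP [_ bq' _ _].
split.
  move=> D HD aD bD; apply: (subsetP (hqa D HD aD _)) cq.
  by apply/negP=> /eqP e; move: bD; rewrite e inE eq_sym (negbTE nab).
move=> D HD cD nD; have sqD := hqc D HD cD nD.
have sq'q := hq'a q Hq aq nqa.
by rewrite (subsetP sqD a aq) (subsetP sqD b (subsetP sq'q b bq')).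
Qed.

Lemma child_exists F D p : is_forest rho F -> p \in clusters F -> D \in clusters F ->
  D \proper p -> exists2 M, (M \in clusters F) && is_parent F M p & D \subset M.
Proof.
move=> fF Hp HD pDp.
case: (fF) => [[_ _ _ _ lam] [cn0 _]].
pose Pr := fun M : {set X} => [&& M \in clusters F, D \subset M & M \proper p].
have PD : Pr D by rewrite /Pr HD subxx pDp.
case: (arg_maxnP (fun M : {set X} => #|M|) PD) => M /and3P [HM sDM pMp] hmax.
exists M => //; rewrite HM /=; apply/and3P; split=> //; apply/forallP=> E; apply/implyP=> /andP [HE pME].
case/or3P: (lam E p HE Hp) => [sEp|//|dEp].
  case: (eqVneq E p) => [-> //|nEp].
  have PE : Pr E by rewrite /Pr HE (subset_trans sDM (proper_sub pME)) properEneq nEp sEp.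
  have h : #|E| <= #|M| := hmax E PE.
  by move: (proper_card pME); rewrite ltnNge h.
case/set0Pn: (cn0 D HD) => x xD.
have xE := subsetP (proper_sub pME) x (subsetP sDM x xD).
have xp := subsetP (proper_sub pMp) x (subsetP sDM x xD).
by move/pred0P/(_ x): dEp => /=; rewrite xE xp.
Qed.

End Pf.

Theorem lemma4p5 (X : finType) (rho : X) (F1 F2 : forest X) (S : {set X}) :
  is_forest rho F1 -> is_forest rho F2 ->
  max_sibling_set rho F2 S ->
  sibling_set rho F1 S ->
  forall F : forest X,
    maximal_agreement_forest rho F1 F2 F ->
    (exists a b, [/\ a \in S, b \in S, a != b & siblings rho F a b]) ->
    max_sibling_set rho F S.
Proof.
move=> fF1 fF2 [_ [p [Hp parS degS]]] sib1 F [[fF sF1 sF2] maxF] [a [b [aS bS nab [p' [pa pb]]]]].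
have nrho : forall x, x \in S -> x != rho := fun x xS => rho_notin fF2 (parS x xS).
have parS' : forall x, x \in S -> is_parent F2 [set x] p.
  by move=> x xS; rewrite -(lv_ne F2 (nrho x xS)); apply: parS.
have iF1 : Inv F1 F := inv_sub (inv_init fF1) sF1.
have iF2 : Inv F2 F := inv_sub (inv_init fF2) sF2.
have pP : part (blocks F) by case: iF1.
have fF_ := fF.
case: fF_ => [[_ csubF _ singF _] _].
rewrite (lv_ne F (nrho a aS)) in pa; rewrite (lv_ne F (nrho b bS)) in pb.
have [Ka HKa /andP [aK bK]] : together F a b.
  case/parP: pa => Hp' ap' _ _; case/parP: pb => _ bp' _ _.
  case: (csubF p' Hp') => K HK sK; exists K => //.
  by rewrite (subsetP sK a ap') (subsetP sK b bp').
have SK : forall c, c \in S -> c \in Ka.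
  move=> c cS; apply/negPn/negP=> cK.
  have nac : a != c by apply: contraNneq cK => <-.
  have nbc : b != c by apply: contraNneq cK => <-.
  have nc := nrho c cS.
  have [q [qa qc]] := sib1 a c aS cS nac.
  have [q' [q'a q'b]] := sib1 a b aS bS nab.
  rewrite !lv_ne ?nrho // in qa qc q'a q'b.
  have [P1 P2] := trio nab qa qc q'a q'b.
  have [R1 R2] := trio nab (parS' a aS) (parS' c cS) (parS' a aS) (parS' b bS).
  have tac1 : together F1 a c.
    case/parP: qa => Hq aq _ _; case/parP: qc => _ cq _ _.
    case: fF1 => [[_ csub1 _ _ _] _]; case: (csub1 q Hq) => K HK sK; exists K => //.
    by rewrite (subsetP sK a aq) (subsetP sK c cq).
  have tac2 : together F2 a c.
    case/parP: (parS' a aS) => _ ap _ _; case/parP: (parS' c cS) => _ cp _ _.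
    case: fF2 => [[_ csub2 _ _ _] _]; case: (csub2 p Hp) => K HK sK; exists K => //.
    by rewrite (subsetP sK a ap) (subsetP sK c cp).
  have P2a : forall D, D \in clusters F1 -> c \in D -> D != [set c] -> a \in D.
    by move=> D HD cD nD; case/andP: (P2 D HD cD nD).
  have R2a : forall D, D \in clusters F2 -> c \in D -> D != [set c] -> a \in D.
    by move=> D HD cD nD; case/andP: (R2 D HD cD nD).
  have tab : together F a b by exists Ka => //; rewrite aK bK.
  have Hc : [set c] \in blocks F.
    case: (sep P1 P2a (inv_init fF1) sF1 tab (or_introl tac1)) => // [[K HK /andP [aK' cK']]].
    by move: cK; rewrite -(part_uniq pP HK HKa aK' aK) cK'.
  pose F' := restr F1 (phi a c (blocks F)).
  have pphi : part (phi a c (blocks F)) := part_phi a c pP.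
  have cl1 : [set c] \in clusters F1 by case: fF1 => [[_ _ _ s _] _]; apply: s.
  have cl2 : [set c] \in clusters F2 by case: fF2 => [[_ _ _ s _] _]; apply: s.
  have eF12 : restr F2 (phi a c (blocks F)) = F'.
    rewrite /F' /restr; congr pair.
    rewrite (rcl_phi pP HKa aK bK cK Hc R1 R2 cl2) (rcl_phi pP HKa aK bK cK Hc P1 P2 cl1).
    by case: iF1 => _ _ <-; case: iF2 => _ _ <-.
  have HB' : c |: Ka \in phi a c (blocks F) by rewrite (phi_memE pP HKa aK cK Hc) eqxx.
  have sCB : [set c] \subset c |: Ka by rewrite sub1set setU11.
  have eF : F = del_edge F' (c |: Ka) [set c].
    rewrite del_edgeE (@del_rcl X F1 F' _ _ pphi (erefl _) HB' sCB).
    change (blocks F') with (phi a c (blocks F)); rewrite (split_back pP HKa aK cK Hc).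
    exact: esym (restr_eta iF1).
  apply: maxF; exists F'; split.
  - split.
    + apply: restr_forest => //.
      move=> K'; rewrite (phi_memE pP HKa aK cK Hc) => /orP [/eqP ->|/and3P [HK _ _]].
        case: iF1 => _ rF _; case: (rF Ka HKa) => B HB sKB; exists B => //.
        case: tac1 => B' HB1 /andP [aB' cB'].
        have eB : B' = B by apply: (part_uniq (forest_part fF1) HB1 HB aB' (subsetP sKB a aK)).
        by rewrite subUset sub1set sKB andbT -eB.
      by case: iF1 => _ rF _; apply: rF.
    + have := lift nac P1 P2a (inv_init fF1) sF1 tab.
      by rewrite (phi_id (forest_part fF1) tac1) (restr_eta (inv_init fF1)).
    + have := lift nac R1 R2a (inv_init fF2) sF2 tab.
      by rewrite (phi_id (forest_part fF2) tac2) (restr_eta (inv_init fF2)) eF12.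
  - apply: (subforest_step (G := F)); last exact: subforest_refl.
    exists (c |: Ka), [set c]; split=> //.
    + apply/rclP; split; first by apply/set0Pn; exists c; rewrite inE.
      by exists [set c] => //; exists (c |: Ka) => //; apply/esym/setIidPl.
    + rewrite properEneq sCB andbT; apply/negP=> /eqP e.
      by move: (setU1r c aK); rewrite -e inE (negbTE nac).
  - rewrite /Ord.
    have -> : blocks F = split (blocks F') (c |: Ka) [set c] by rewrite eF.
    rewrite card_split //.
      by apply/set0Pn; exists c; rewrite inE.
    have -> : (c |: Ka) :\: [set c] = Ka.
      apply/setP=> y; rewrite !inE; case: (eqVneq y c) => [->|] //=.
      by rewrite (negbTE cK).
    by apply/set0Pn; exists a.
have pK : forall x, x \in S -> x \in p by move=> x xS; case/parP: (parS' x xS).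
have clF2 : clusters F = rcl F2 (blocks F) by case: iF2.
have ap : a \in p := pK a aS.
have Hp'' : p :&: Ka \in clusters F.
  rewrite clF2; apply/rclP; split; first by apply/set0Pn; exists a; rewrite inE ap aK.
  by exists p => //; exists Ka.
have parF : forall x, x \in S -> is_parent F [set x] (p :&: Ka).
  move=> x xS; apply/and3P; split=> //.
    rewrite properEneq sub1set in_setI pK // SK // !andbT.
    apply/negP=> /eqP e.
    have : a \in [set x] by rewrite e inE ap aK.
    have : b \in [set x] by rewrite e inE pK ?bK.
    rewrite !inE => /eqP eb /eqP ea; by move: nab; rewrite ea eb eqxx.
  apply/forallP=> E; apply/implyP=> /andP [HE]; rewrite properEneq sub1set => /andP [nE xE].
  move: HE; rewrite clF2 => /rclP [_ [D HD [K HK eE]]].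
  have xK : x \in K by move: xE; rewrite eE inE => /andP [].
  have xD : x \in D by move: xE; rewrite eE inE => /andP [].
  have eK : K = Ka := part_uniq pP HK HKa xK (SK x xS).
  have nD : D != [set x].
    apply/negP=> /eqP eD; move: nE; rewrite eE eD eq_sym; apply/negP/negPn/eqP.
    by apply/setIidPl; rewrite sub1set.
  case/parP: (parS' x xS) => _ _ _ h; have sp := h D HD xD nD.
  by rewrite eE eK; apply: setSI.
have fF2_ := fF2.
case: fF2_ => [[_ _ _ sing2 lam2] _].
have chF2 : children F2 p = [set [set x] | x in S].
  apply/esym/eqP; rewrite eqEcard; apply/andP; split.
    apply/subsetP=> Y /imsetP [x xS ->]; rewrite /children inE (parS' x xS) andbT.
    exact: sing2 (nrho x xS).
  rewrite card_imset; last exact: set1_inj.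
  move: degS; rewrite /degree; case: (has_parent F2 p).
    by move=> /eqP; rewrite eqn_add2r => /eqP ->.
  by rewrite addn0 => ->.
have chF : children F (p :&: Ka) = [set [set x] | x in S].
  apply/setP=> E; apply/idP/imsetP.
  - rewrite /children inE => /andP [HE parE].
    case/and3P: parE => _ pE _.
    move: HE; rewrite clF2 => /rclP [nE [D HD [K HK eE]]].
    case/set0Pn: (nE) => y yE.
    have yp : y \in p :&: Ka := subsetP (proper_sub pE) y yE.
    have yK : y \in K by move: yE; rewrite eE inE => /andP [].
    have yD : y \in D by move: yE; rewrite eE inE => /andP [].
    have eK : K = Ka by apply: part_uniq pP HK HKa yK _; move: yp; rewrite inE => /andP [].
    case/or3P: (lam2 D p HD Hp) => [sDp|spD|dDp].
    + case: (eqVneq D p) => [eDp|nDp].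
        by move: pE; rewrite eE eK eDp properE subxx andbF.
      have pDp : D \proper p by rewrite properEneq nDp sDp.
      have [M /andP [HM parM] sDM] := child_exists fF2 Hp HD pDp.
      have : M \in children F2 p by rewrite /children inE HM parM.
      rewrite chF2 => /imsetP [z zS eM].
      have eD : D = [set z].
        move: sDM; rewrite eM subset1 => /orP [/eqP //|/eqP e0].
        by move: yD; rewrite e0 inE.
      exists z => //; rewrite eE eK eD; apply/setIidPl; rewrite sub1set SK //.
    + move: pE; rewrite properE => /andP [_ /negP]; case.
      by rewrite eE eK; apply: setSI.
    + move/pred0P/(_ y): dDp => /=; rewrite yD.
      by move: yp; rewrite inE => /andP [->].
  - by case=> x xS ->; rewrite /children inE parF // singF ?nrho.
split.
  move=> x y xS yS nxy; exists (p :&: Ka); rewrite !lv_ne ?nrho //.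
  by split; apply: parF.
exists (p :&: Ka); split=> //.
  by move=> x xS; rewrite lv_ne ?nrho //; apply: parF.
rewrite /degree chF card_imset; last exact: set1_inj.
by case: (has_parent F (p :&: Ka)); rewrite ?addn0.
Qed.
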